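(* Let $n\ge1$ and let $\mathcal{LF}_2:S_n\to\mathbb{N}$ be the Lehmer factorial norm. Then: (i) $\mathcal{LF}_2(e_n)=0$ is the minimal value, and $e_n$ is the only permutation attaining it. (ii) $\mathcal{LF}_2(\bar e_n)=2^n-(n+1)$ is the maximal value, and $\bar e_n$ is the only permutation attaining it. (iii) For $s=1,\dots,n-1$, $\mathcal{LF}_2(\sigma_s)=2^{n-1-s}$; hence $\mathcal{LF}_2(\sigma_1)>\mathcal{LF}_2(\sigma_2)>\dots>\mathcal{LF}_2(\sigma_{n-1})$. (iv) The inclusion $\iota_n:S_n\to S_{n+1}$, $\iota_n(\sigma)=(1,\sigma(1)+1,\sigma(2)+1,\dots,\sigma(n)+1)$, satisfies $\mathcal{LF}_2(\iota_n(\sigma))=\mathcal{LF}_2(\sigma)$ for all $\sigma\in S_n$. (v) $\mathcal{LF}_2(\sigma)=\mathcal{LF}_2(\sigma^{-1})$ for all $\sigma\in S_n$. (vi) $\mathcal{LF}_2(\sigma\tau)\le\mathcal{LF}_2(\sigma)+\mathcal{LF}_2(\tau)$ for all $\sigma,\tau\in S_n$. (vii) For $\sigma\in S_n$, $s\in\{1,\dots,n-1\}$ and $\tau=\sigma\sigma_s$, $$|\mathcal{LF}_2(\tau)-\mathcal{LF}_2(\sigma)|=2^{-\min\{c_s(\sigma),c_{s+1}(\sigma)\}}\,\mathcal{LF}_2(\sigma_s).$$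
   Context: $[n]=\{1,\dots,n\}$, $S_n$ is the group of permutations of $[n]$, a permutation is written $\sigma=(\sigma(1),\dots,\sigma(n))$, composition is $(\sigma\tau)(i)=\sigma(\tau(i))$. $e_n=(1,2,\dots,n)$ is the identity and $\bar e_n=(n,n-1,\dots,1)$ its reverse. For $s=1,\dots,n-1$, $\sigma_s$ is the adjacent transposition swapping $s$ and $s+1$. For $\sigma\in S_n$ and $i\in[n]$, $c_i(\sigma)=|\{j\in[n]: j>i \text{ and } \sigma(j)<\sigma(i)\}|$ (Lehmer code entries), and $k_i(\sigma)=c_{n-i}(\sigma)$ for $i=0,\dots,n-1$. The Lehmer factorial norm (with base 2) is $\mathcal{LF}_2(\sigma)=\sum_{i=0}^{n-1}\left[2^i-2^{i-k_i(\sigma)}\right]$. *)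

(* Defs.v *)
(* Permutations of [n] are modelled by 'S_n = {perm 'I_n},
   with 0-based positions/values: paper position i (1..n) is ordinal i-1. *)
From mathcomp Require Import all_boot all_order all_algebra all_fingroup.
Set Implicit Arguments. Unset Strict Implicit. Unset Printing Implicit Defensive.

(* Paper composition (sigma tau)(i) = sigma(tau(i)).
   MathComp's product is (s * t) x = t (s x), so sigma tau = t * s. *)
Definition paper_comp n (sigma tau : 'S_n) : 'S_n := (tau * sigma)%g.

Definition e_perm n : 'S_n := 1%g.

Definition ebar n : 'S_n := perm (@rev_ord_inj n).

(* sigma_s (paper, 1 <= s <= n-1): the adjacent transposition swapping
   s and s+1, i.e. 0-based ordinals s-1 and s. *)
Definition adjT n (s : nat) : 'S_n :=
  match insub s.-1, insub s with
  | Some a, Some b => tperm a b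
  | _, _ => 1%g
  end.

(* Lehmer code: for 0-based position i, lehmer sigma i is the paper's
   c_{i+1}(sigma) = #{ j > i : sigma(j) < sigma(i) }. *)
Definition lehmer n (sigma : 'S_n) (i : 'I_n) : nat :=
  #|[set j : 'I_n | (i < j) && (sigma j < sigma i)]|.

(* k_i(sigma) = c_{n-i}(sigma), i = 0..n-1; paper index n-i is 0-based n-1-i *)
Definition kcode n (sigma : 'S_n) (i : 'I_n) : nat := lehmer sigma (rev_ord i).

(* Lehmer factorial norm with base 2 (note k_i <= i, so no truncation issue) *)
Definition LF2 n (sigma : 'S_n) : nat :=
  \sum_(i < n) (2 ^ i - 2 ^ (i - kcode sigma i)).

Definition iota_incl n (sigma : 'S_n) : 'S_n.+1 := lift_perm ord0 ord0 sigma.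

(* Main.v *)
Require Import Defs.
From mathcomp Require Import all_boot all_order all_algebra all_fingroup zify.
Import GRing.Theory Num.Theory.
Set Implicit Arguments. Unset Strict Implicit. Unset Printing Implicit Defensive.

Lemma count_gt_iota (p m : nat) : count (fun k => p < k) (iota 0 m) = m - p.+1.
Proof.
elim: m => [|m IH] //.
rewrite -[m.+1]addn1 iotaD count_cat IH /= add0n addn0.
case: (ltnP p m) => h; lia.
Qed.

Lemma card_gt n (p : 'I_n) : #|[set x : 'I_n | p < x]| = n - p.+1.
Proof.
rewrite cardsE cardE /enum_mem size_filter -enumT.
rewrite -(count_gt_iota p n) -val_enum_ord count_map.
by apply: eq_count.
Qed.

Definition wt (m c : nat) := 2 ^ m - 2 ^ (m - c).

Lemma LF2_pos n (s : 'S_n) : LF2 s = \sum_(p < n) wt (n - p.+1) (lehmer s p).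
Proof.
rewrite /LF2 (reindex_inj rev_ord_inj) /=.
by apply: eq_bigr => p _; rewrite /kcode rev_ordK.
Qed.

Lemma lehmer_le n (s : 'S_n) p : lehmer s p <= n - p.+1.
Proof.
rewrite -card_gt /lehmer; apply: subset_leq_card; apply/subsetP => x.
by rewrite !inE => /andP [].
Qed.

Lemma kcode_le n (s : 'S_n) i : kcode s i <= i.
Proof.
rewrite /kcode; apply: leq_trans (lehmer_le _ _) _ => /=.
have := ltn_ord i; lia.
Qed.

Lemma split_adj n (i j : 'I_n) (P : pred 'I_n) : val j = (val i).+1 ->
  #|[set x : 'I_n | (i < x) && P x]| = P j + #|[set x : 'I_n | (j < x) && P x]|.
Proof.
move=> hij; rewrite (cardsD1 j) in_set hij ltnSn /=.
congr (_ + _); apply: eq_card => x /=; rewrite !inE -val_eqE /= hij.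
case: (P x); rewrite ?andbF ?andbT //.
by rewrite [_.+1 < _]ltn_neqAle eq_sym.
Qed.
Definition good n (s : 'S_n) (T : {set 'I_n}) :=
  [exists p in T, [forall x in T, (p <= x) && (s p <= s x)]].
Definition Dset n (s : 'S_n) := [set T : {set 'I_n} | (T != set0) && ~~ good s T].

Definition Aset n (p : 'I_n) (U : {set 'I_n}) :=
  [set T : {set 'I_n} | (p \in T) && (T \subset p |: U)].

Lemma card_Aset n (p : 'I_n) (U : {set 'I_n}) : p \notin U -> #|Aset p U| = 2 ^ #|U|.
Proof.
move=> pU.
have -> : Aset p U = [set p |: S | S in powerset U].
  apply/setP => T; rewrite inE; apply/andP/imsetP.
  - case=> pT TU; exists (T :\ p); first by rewrite inE subDset.
    by rewrite setD1K.
  - case=> S; rewrite inE => SU ->; split; first by rewrite setU11.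
    by rewrite setUS.
rewrite card_in_imset ?card_powerset // => S1 S2; rewrite !inE => S1U S2U E.
have p1 : p \notin S1 by apply: contra pU; apply: (subsetP S1U).
have p2 : p \notin S2 by apply: contra pU; apply: (subsetP S2U).
by rewrite -(setU1K p1) -(setU1K p2) E.
Qed.

Lemma inA1 n (p : 'I_n) (T : {set 'I_n}) :
  reflect (p \in T /\ forall x, x \in T -> p <= x) (T \in Aset p [set x : 'I_n | p < x]).
Proof.
rewrite inE; apply: (iffP andP) => [[pT /subsetP sub]|[pT h]]; split=> //.
- move=> x xT; have := sub x xT; rewrite !inE; case/orP => [/eqP -> | ]; first by rewrite leqnn.
  by move/ltnW.
- apply/subsetP => x xT; rewrite !inE; case: (eqVneq x p) => [//|xp] /=.
  by rewrite ltn_neqAle val_eqE eq_sym xp h.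
Qed.

Lemma inA2 n (s : 'S_n) (p : 'I_n) (T : {set 'I_n}) :
  reflect (p \in T /\ forall x, x \in T -> (p <= x) && (s p <= s x))
     (T \in Aset p [set x : 'I_n | (p < x) && (s p < s x)]).
Proof.
rewrite inE; apply: (iffP andP) => [[pT /subsetP sub]|[pT h]]; split=> //.
- move=> x xT; have := sub x xT; rewrite !inE; case/orP => [/eqP -> | /andP [a b]]; first by rewrite !leqnn.
  by rewrite (ltnW a) (ltnW b).
- apply/subsetP => x xT; rewrite !inE; case: (eqVneq x p) => [//|xp] /=.
  have /andP [h1 h2] := h x xT.
  rewrite ltn_neqAle val_eqE eq_sym xp h1 /= ltn_neqAle h2 andbT val_eqE.
  by rewrite (inj_eq perm_inj) eq_sym.
Qed.

Definition Dp n (s : 'S_n) (p : 'I_n) :=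
  Aset p [set x : 'I_n | p < x] :\: Aset p [set x : 'I_n | (p < x) && (s p < s x)].

Lemma card_Dp n (s : 'S_n) p : #|Dp s p| = wt (n - p.+1) (lehmer s p).
Proof.
rewrite /Dp cardsD.
have sub : Aset p [set x : 'I_n | (p < x) && (s p < s x)] \subset Aset p [set x : 'I_n | p < x].
  apply/subsetP => T /inA2 [pT h]; apply/inA1; split=> // x /h /andP [] //.
rewrite (setIidPr sub) !card_Aset ?inE ?ltnn // card_gt /wt.
congr (_ - 2 ^ _).
have := cardsID [set x : 'I_n | s x < s p] [set x : 'I_n | p < x].
rewrite card_gt.
have -> : [set x : 'I_n | p < x] :&: [set x : 'I_n | s x < s p] = [set j : 'I_n | (p < j) && (s j < s p)].
  by apply/setP => x; rewrite !inE.
have -> : [set x : 'I_n | p < x] :\: [set x : 'I_n | s x < s p] = [set x : 'I_n | (p < x) && (s p < s x)].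
  apply/setP => x; rewrite !inE andbC; case: (ltnP p x) => px //=.
  rewrite -leqNgt ltn_neqAle val_eqE (inj_eq perm_inj).
  case: (eqVneq p x) => [e|//]; by rewrite e ltnn in px.
by move=> <-; rewrite /lehmer addKn.
Qed.

Lemma Dcount n (s : 'S_n) : #|Dset s| = \sum_(p < n) wt (n - p.+1) (lehmer s p).
Proof.
under eq_bigr => p _ do rewrite -card_Dp -sum1_card big_mkcond /=.
rewrite exchange_big /= -sum1_card big_mkcond /=.
apply: eq_bigr => T _.
rewrite inE; case: (set_0Vmem T) => [->|[x0 x0T]].
  by rewrite eqxx /= big1 // => p _; rewrite /Dp !inE andFb andbF.
have [p0 p0T0 p0min] := arg_minnP (fun x : 'I_n => val x) x0T.
have p0T : p0 \in T := p0T0.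
have Tne : T != set0 by apply/set0Pn; exists x0.
rewrite Tne /= (bigD1 p0) //= big1 ?addn0; last first.
  move=> q qp; case: ifP => // hq.
  move: hq; rewrite /Dp inE => /andP [_ /inA1 [qT qmin]].
  have e : val q = val p0 by apply/anti_leq; rewrite qmin // p0min.
  by move: qp; rewrite -val_eqE e eqxx.
have -> : (T \in Dp s p0) = ~~ good s T; last by [].
rewrite /Dp inE.
have -> : T \in Aset p0 [set x : 'I_n | p0 < x] by apply/inA1; split.
rewrite andbT; congr (~~ _); apply/inA2/existsP.
- case=> pT h; exists p0; rewrite p0T /=; apply/forallP => x; apply/implyP => xT.
  exact: h.
- case=> q /andP [qT /forallP h].
  have /andP [h1 _] := implyP (h p0) p0T.
  have e : q = p0 by apply/val_inj/anti_leq; rewrite h1 p0min.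
  subst q; split=> // x xT; exact: (implyP (h x) xT).
Qed.

Lemma LF2_D n (s : 'S_n) : LF2 s = #|Dset s|.
Proof. by rewrite LF2_pos Dcount. Qed.

Lemma good_inv n (s : 'S_n) (T : {set 'I_n}) : good (s^-1)%g (s @: T) = good s T.
Proof.
apply/existsP/existsP.
- case=> y /andP [/imsetP [p pT ->] /forallP h]; exists p; rewrite pT /=.
  apply/forallP => x; apply/implyP => xT.
  have /andP [a b] := implyP (h (s x)) (imset_f _ xT).
  by rewrite !permK in b; rewrite a b.
- case=> p /andP [pT /forallP h]; exists (s p); rewrite imset_f //=.
  apply/forallP => y; apply/implyP => /imsetP [x xT ->].
  have /andP [a b] := implyP (h x) xT.
  by rewrite !permK a b.
Qed.

Lemma LF2_inv n (s : 'S_n) : LF2 s = LF2 (s^-1)%g.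
Proof.
rewrite !LF2_D.
have -> : Dset s = (fun T : {set 'I_n} => s @: T) @^-1: Dset (s^-1)%g.
  by apply/setP => T; rewrite !inE imset_eq0 good_inv.
by rewrite card_preimset //; apply: imset_inj; apply: perm_inj.
Qed.

Lemma good_comp n (s t : 'S_n) (T : {set 'I_n}) :
  good t T -> good s (t @: T) -> good (t * s)%g T.
Proof.
case/existsP => p /andP [pT /forallP hp].
case/existsP => y /andP [/imsetP [r rT ->] /forallP hr].
have /andP [a1 _] := implyP (hr (t p)) (imset_f _ pT).
have /andP [_ a2] := implyP (hp r) rT.
have e : r = p by apply: (@perm_inj _ t); apply/val_inj/anti_leq; rewrite a1 a2.
subst r; apply/existsP; exists p; rewrite pT /=; apply/forallP => x; apply/implyP => xT.
have /andP [b1 _] := implyP (hp x) xT.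
have /andP [_ b2] := implyP (hr (t x)) (imset_f _ xT).
by rewrite !permM b1 b2.
Qed.

Lemma LF2_comp n (s t : 'S_n) : LF2 (paper_comp s t) <= LF2 s + LF2 t.
Proof.
rewrite !LF2_D /paper_comp.
have sub : Dset (t * s)%g \subset Dset t :|: ((fun T : {set 'I_n} => t @: T) @^-1: Dset s).
  apply/subsetP => T; rewrite !inE => /andP [Tne ng]; rewrite Tne imset_eq0 Tne /=.
  apply: contraR ng; rewrite negb_or !negbK => /andP [g1 g2]; exact: good_comp.
apply: leq_trans (subset_leq_card sub) _.
rewrite cardsU card_preimset; last by apply: imset_inj; apply: perm_inj.
by rewrite addnC leq_subr.
Qed.

Lemma term_le_sum n (f : 'I_n -> nat) i : f i <= \sum_(j < n) f j.
Proof. by rewrite (bigD1 i) //= leq_addr. Qed.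

Lemma sum_eq_le n (f g : 'I_n -> nat) : (forall i, f i <= g i) ->
  \sum_(i < n) f i = \sum_(i < n) g i -> forall i, f i = g i.
Proof.
move=> le E i; move: E; rewrite (bigD1 i) //= [X in _ = X](bigD1 i) //=.
have : \sum_(j < n | j != i) f j <= \sum_(j < n | j != i) g j by apply: leq_sum.
have := le i. move: (\sum_(j < n | j != i) f j) (\sum_(j < n | j != i) g j) (f i) (g i).
move=> a b c d; lia.
Qed.

Lemma incr_ge n (s : 'S_n) : (forall p x : 'I_n, p < x -> s p < s x) ->
  forall k (x : 'I_n), val x = k -> k <= s x.
Proof.
move=> H; elim=> [//|k IH] x hx.
have kn : k < n by have := ltn_ord x; rewrite hx; lia.
have := IH (Ordinal kn) erefl; have := H (Ordinal kn) x; rewrite /= hx => h.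
have := h (ltnSn k); lia.
Qed.

Lemma incr_id n (s : 'S_n) : (forall p x : 'I_n, p < x -> s p < s x) -> s = 1%g.
Proof.
move=> H.
have Hi : forall p x : 'I_n, p < x -> (s^-1)%g p < (s^-1)%g x.
  move=> p x px; rewrite ltnNge; apply/negP => h.
  rewrite leq_eqVlt in h; case/orP: h => [/eqP e | l].
    have e' : (s^-1)%g x = (s^-1)%g p by apply: val_inj.
    move/perm_inj: e' => e''; by rewrite e'' ltnn in px.
  have := H _ _ l; rewrite !permKV; lia.
apply/permP => x; rewrite perm1; apply/val_inj/anti_leq.
rewrite (incr_ge H erefl) andbT.
have := incr_ge Hi (erefl (val (s x))); by rewrite permK.
Qed.

Lemma decr_ebar n (s : 'S_n) : (forall p x : 'I_n, p < x -> s x < s p) -> s = ebar n.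
Proof.
move=> H.
have e : (s * ebar n)%g = 1%g.
  apply: incr_id => p x px; rewrite !permM /ebar !permE /=.
  have := H _ _ px; have := ltn_ord (s p); lia.
apply/permP => x.
have h : (s * ebar n)%g x = (1%g : 'S_n) x by rewrite e.
rewrite permM perm1 /ebar !permE in h. by rewrite /ebar permE -[in RHS]h rev_ordK.
Qed.

Lemma lehmer1 n (p : 'I_n) : lehmer (1%g : 'S_n) p = 0.
Proof.
apply/eqP; rewrite cards_eq0; apply/eqP/setP => x; rewrite !inE !perm1.
apply/negbTE/negP => /andP [a b]; lia.
Qed.

Lemma lehmer0_incr n (s : 'S_n) (p x : 'I_n) : lehmer s p = 0 -> p < x -> s p < s x.
Proof.
move=> /eqP; rewrite cards_eq0 => /eqP E px.
have : x \notin [set j : 'I_n | (p < j) && (s j < s p)] by rewrite E in_set0.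
rewrite inE px /= -leqNgt leq_eqVlt => /orP [/eqP e|//].
have : s p = s x by apply: val_inj.
move/perm_inj => e'; by rewrite e' ltnn in px.
Qed.

Lemma wt0 m : wt m 0 = 0.
Proof. by rewrite /wt subn0 subnn. Qed.

Lemma part_i n : LF2 (e_perm n) = 0 /\ (forall sigma : 'S_n, LF2 (e_perm n) <= LF2 sigma)
       /\ (forall sigma : 'S_n, LF2 sigma = LF2 (e_perm n) -> sigma = e_perm n).
Proof.
have E : LF2 (e_perm n) = 0.
  by rewrite LF2_pos big1 // => p _; rewrite /e_perm lehmer1 wt0.
split=> //; split=> [s|s]; first by rewrite E.
rewrite E LF2_pos => h; apply: incr_id => p x; apply: lehmer0_incr.
have := term_le_sum (fun p => wt (n - p.+1) (lehmer s p)) p; rewrite h /wt.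
have := lehmer_le s p.
have := @leq_pexp2l 2 (n - p.+1 - lehmer s p) (n - p.+1) isT (leq_subr _ _).
move: (lehmer s p) => c; move: (n - p.+1) => m.
move=> h1 h2 h3.
have h4 : 2 ^ m <= 2 ^ (m - c) by lia.
rewrite leq_exp2l // in h4; lia.
Qed.

Lemma lehmer_ebar n (p : 'I_n) : lehmer (ebar n) p = n - p.+1.
Proof.
rewrite /lehmer -card_gt; apply: eq_card => x; rewrite !inE /ebar !permE /=.
case: (ltnP p x) => h //=; have := ltn_ord x; lia.
Qed.

Lemma kcode_ebar n (i : 'I_n) : kcode (ebar n) i = i.
Proof. rewrite /kcode lehmer_ebar /=; have := ltn_ord i; lia. Qed.

Lemma sum_pow n : \sum_(i < n) (2 ^ i - 1) = 2 ^ n - n.+1.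
Proof.
elim: n => [|n IH]; first by rewrite big_ord0.
rewrite big_ord_recr /= IH expnS; have := ltn_expl n (isT : 1 < 2); lia.
Qed.

Lemma k_eq i k : k <= i -> 2 ^ i - 2 ^ (i - k) = 2 ^ i - 1 -> k = i.
Proof.
move=> ki; case e: (i - k) => [|m]; first lia.
have h1 : 2 ^ m.+1 <= 2 ^ i by rewrite -e; apply: leq_pexp2l => //; apply: leq_subr.
have h2 : 0 < 2 ^ m by rewrite expn_gt0.
move: h1; rewrite expnS; lia.
Qed.

Lemma part_ii n : LF2 (ebar n) = (2 ^ n - n.+1)
       /\ (forall sigma : 'S_n, LF2 sigma <= LF2 (ebar n))
       /\ (forall sigma : 'S_n, LF2 sigma = LF2 (ebar n) -> sigma = ebar n).
Proof.
have E : LF2 (ebar n) = \sum_(i < n) (2 ^ i - 1).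
  by apply: eq_bigr => i _; rewrite kcode_ebar subnn expn0.
split; first by rewrite E sum_pow.
have le : forall (s : 'S_n) (i : 'I_n), 2 ^ i - 2 ^ (i - kcode s i) <= 2 ^ i - 2 ^ (i - kcode (ebar n) i).
  move=> s i; rewrite kcode_ebar subnn expn0; apply: leq_sub2l; by rewrite expn_gt0.
split=> [s|s h]; first by apply: leq_sum => i _; apply: le.
have K := sum_eq_le (le s) h.
apply: decr_ebar => p x px.
have Lp : lehmer s p = n - p.+1.
  have := K (rev_ord p); rewrite kcode_ebar subnn expn0 => /k_eq.
  rewrite /kcode rev_ordK => -> //; have := lehmer_le s p; rewrite /=; lia.
have sub : [set j : 'I_n | (p < j) && (s j < s p)] \subset [set j : 'I_n | p < j].
  by apply/subsetP => y; rewrite !inE => /andP [].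
have := subset_cardP _ sub; rewrite card_gt -Lp => /(_ erefl) eqS.
by have := eqS x; rewrite !inE px /= => ->.
Qed.

Lemma tperm_val n (a b x : 'I_n) : nat_of_ord b = (nat_of_ord a).+1 ->
  nat_of_ord (tperm a b x) = if nat_of_ord x == nat_of_ord a then nat_of_ord b else if nat_of_ord x == nat_of_ord b then nat_of_ord a else nat_of_ord x.
Proof.
move=> hab; case: tpermP => [->|->|xa xb]; rewrite ?eqxx //.
- by rewrite hab; case: ifP => /eqP h //; lia.
- by rewrite !val_eqE; case: eqP => [/xa|_] //; case: eqP => [/xb|_].
Qed.

Lemma lehmer_tperm n (a b : 'I_n) (p : 'I_n) : nat_of_ord b = (nat_of_ord a).+1 ->
  lehmer (tperm a b) p = (p == a).
Proof.
move=> hab; case: (eqVneq p a) => [->|pa] /=.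
- rewrite /lehmer -(cards1 b); apply: eq_card => x; rewrite !inE.
  apply/idP/idP.
  + case/andP => h1; rewrite -val_eqE !tperm_val //=.
    by repeat case: ifP => /eqnP ?; move=> ?; try apply/eqnP; lia.
  + move/eqP ->; rewrite tpermL tpermR hab ltnSn /=; lia.
- apply/eqP; rewrite cards_eq0; apply/eqP/setP => x; rewrite !inE.
  apply/negbTE/negP => /andP [h1]; rewrite !tperm_val //.
  have pa' : nat_of_ord p <> nat_of_ord a by move=> e; move: pa; rewrite (ord_inj e) eqxx.
  by repeat case: ifP => /eqnP ?; lia.
Qed.

Lemma LF2_tperm n (a b : 'I_n) : nat_of_ord b = (nat_of_ord a).+1 -> LF2 (tperm a b) = 2 ^ (n - 1 - b).
Proof.
move=> hab; rewrite LF2_pos (bigD1 a) //= big1 ?addn0; last first.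
  by move=> p pa; rewrite lehmer_tperm // (negbTE pa) wt0.
rewrite lehmer_tperm // eqxx /wt.
have bn := ltn_ord b.
have -> : n - a.+1 = (n - 1 - b).+1 by lia.
set k := n - 1 - b.
by rewrite subn1 /= expnS; lia.
Qed.

Lemma adjT_eq n (a b : 'I_n) : nat_of_ord b = (nat_of_ord a).+1 -> adjT n b = tperm a b.
Proof.
move=> hab; rewrite /adjT (_ : (nat_of_ord b).-1 = val a); last by rewrite hab.
by rewrite !valK.
Qed.

Lemma part_iii n : (forall s : nat, 0 < s -> s < n -> LF2 (adjT n s) = 2 ^ (n - 1 - s))
       /\ (forall s : nat, 0 < s -> s.+1 < n -> LF2 (adjT n s.+1) < LF2 (adjT n s)).
Proof.
have H : forall s : nat, 0 < s -> s < n -> LF2 (adjT n s) = 2 ^ (n - 1 - s).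
  move=> s s0 sn.
  have an : s.-1 < n by lia.
  have := @adjT_eq n (Ordinal an) (Ordinal sn); rewrite /= => ->; last by lia.
  by rewrite LF2_tperm //= ; lia.
split=> // s s0 sn; rewrite !H //; try lia.
rewrite ltn_exp2l //; lia.
Qed.

Lemma part_iv n (s : 'S_n) : LF2 (iota_incl s) = LF2 s.
Proof.
rewrite !LF2_pos big_ord_recl.
have -> : lehmer (iota_incl s) ord0 = 0.
  apply/eqP; rewrite cards_eq0; apply/eqP/setP => x; rewrite !inE.
  rewrite /iota_incl lift_perm_id /=; apply/negP => /andP [_ h]; lia.
rewrite wt0 add0n; apply: eq_bigr => p _.
rewrite lift0 subSS; congr (wt _ _).
rewrite /lehmer.
have -> : [set j : 'I_n.+1 | (lift ord0 p < j) && (iota_incl s j < iota_incl s (lift ord0 p))]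
   = lift ord0 @: [set j : 'I_n | (p < j) && (s j < s p)].
  apply/setP => x; case: (unliftP ord0 x) => [y ->|->].
  - rewrite mem_imset; last exact: lift_inj.
    by rewrite !inE /iota_incl !lift_perm_lift !lift0 !ltnS.
  - rewrite !inE /=; apply/esym/negbTE/imsetP => [[y _ e]].
    by move: (neq_lift ord0 y); rewrite -e eqxx.
by rewrite card_imset //; apply: lift_inj.
Qed.

Section Swap.
Variables (n : nat) (i j : 'I_n).
Hypothesis hij : nat_of_ord j = (nat_of_ord i).+1.

Lemma ij_neq : i != j.
Proof. apply/eqP => e; move: hij; rewrite e; lia. Qed.

Lemma gt_j_neq (x : 'I_n) : j < x -> (i != x) && (j != x).
Proof.
move=> jx; apply/andP; split; apply/eqP => e; move: jx; rewrite -e; lia.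
Qed.

Lemma lehmer_swap_other (s : 'S_n) p : p != i -> p != j ->
  lehmer (tperm i j * s)%g p = lehmer s p.
Proof.
move=> pi pj; rewrite /lehmer.
have -> : [set x : 'I_n | (p < x) && ((tperm i j * s)%g x < (tperm i j * s)%g p)]
   = tperm i j @^-1: [set x : 'I_n | (p < x) && (s x < s p)].
  have ip : i != p by rewrite eq_sym.
  have jp : j != p by rewrite eq_sym.
  apply/setP => x; rewrite !inE !permM (tpermD ip jp).
  have pi' : nat_of_ord p <> nat_of_ord i by move=> e; move: pi; rewrite (ord_inj e) eqxx.
  have pj' : nat_of_ord p <> nat_of_ord j by move=> e; move: pj; rewrite (ord_inj e) eqxx.
  have -> : (p < x) = (p < tperm i j x).
    rewrite tperm_val //.
    by repeat case: ifP => /eqnP ?; apply/idP/idP; lia.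
  by [].
by rewrite card_preimset //; apply: perm_inj.
Qed.

Lemma lehmer_swap_i (s : 'S_n) : lehmer (tperm i j * s)%g i = (s i < s j) + lehmer s j.
Proof.
rewrite /lehmer.
transitivity #|[set x : 'I_n | (i < x) && (s (tperm i j x) < s j)]|.
  by apply: eq_card => x; rewrite !inE !permM tpermL.
rewrite (@split_adj n i j (fun x => s (tperm i j x) < s j) hij) /= tpermR.
congr (_ + _); apply: eq_card => x; rewrite !inE.
case jx: (j < x) => //=.
by have /andP [a b] := gt_j_neq jx; rewrite tpermD.
Qed.

Lemma lehmer_swap_j (s : 'S_n) : lehmer (tperm i j * s)%g j + (s j < s i) = lehmer s i.
Proof.
rewrite /lehmer.
rewrite [X in _ = X](@split_adj n i j (fun x => s x < s i) hij) /= addnC.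
congr (_ + _); apply: eq_card => x; rewrite !inE !permM tpermR.
case jx: (j < x) => //=.
by have /andP [a b] := gt_j_neq jx; rewrite tpermD.
Qed.

Lemma sum2 (f g : 'I_n -> nat) : (forall p, p != i -> p != j -> f p = g p) ->
  \sum_(p < n) f p + g i + g j = \sum_(p < n) g p + f i + f j.
Proof.
move=> H.
have ji : j != i by rewrite eq_sym ij_neq.
rewrite [\sum_(p < n) f p](bigD1 i) // [\sum_(p < n) g p](bigD1 i) //=.
rewrite [\sum_(p < n | p != i) f p](bigD1 j) // [\sum_(p < n | p != i) g p](bigD1 j) //=.
rewrite (eq_bigr g); last by move=> p /andP [a b]; apply: H.
move: (\sum_(p < n | (p != i) && (p != j)) g p) => S; lia.
Qed.

Lemma key (s : 'S_n) : s i < s j ->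
  [/\ lehmer (tperm i j * s)%g i = (lehmer s j).+1,
      lehmer (tperm i j * s)%g j = lehmer s i,
      lehmer s i <= lehmer s j &
      LF2 (tperm i j * s)%g = LF2 s + 2 ^ (n - j.+1 - lehmer s i)].
Proof.
move=> h.
have Li : lehmer (tperm i j * s)%g i = (lehmer s j).+1 by rewrite lehmer_swap_i h.
have Lj : lehmer (tperm i j * s)%g j = lehmer s i.
  have := lehmer_swap_j s; rewrite ltnNge (ltnW h) addn0 => //.
have le : lehmer s i <= lehmer s j.
  rewrite /lehmer (@split_adj n i j (fun x => s x < s i) hij) /= ltnNge (ltnW h) add0n.
  apply: subset_leq_card; apply/subsetP => x; rewrite !inE => /andP [a b].
  by rewrite a /= (ltn_trans b h).
split=> //.
have S := sum2 (f := fun p => wt (n - p.+1) (lehmer (tperm i j * s)%g p))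
                (g := fun p => wt (n - p.+1) (lehmer s p)).
rewrite /= Li Lj in S.
have := S (fun p pi pj => congr1 _ (lehmer_swap_other s pi pj)).
rewrite -!LF2_pos.
have cj := lehmer_le s j.
have ei : n - i.+1 = (n - j.+1).+1 by have := ltn_ord j; lia.
rewrite ei /wt.
move: (lehmer s i) (lehmer s j) le cj => ci cj' le1 le2.
set a := n - j.+1 in le2 *.
rewrite subSS (subSn (leq_trans le1 le2)) !expnS.
have u1 : 2 ^ (a - ci) <= 2 ^ a by apply: leq_pexp2l => //; apply: leq_subr.
have u2 : 2 ^ (a - cj') <= 2 ^ a by apply: leq_pexp2l => //; apply: leq_subr.
move: (2 ^ (a - ci)) (2 ^ (a - cj')) (2 ^ a) u1 u2 => U V X u1 u2.
lia.
Qed.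

End Swap.

Lemma part_vii n (sigma : 'S_n) (i j : 'I_n) : val j = (val i).+1 ->
  (`|(LF2 (paper_comp sigma (adjT n (val j))))%:R - (LF2 sigma)%:R| =
        (LF2 (adjT n (val j)))%:R / 2 ^+ minn (lehmer sigma i) (lehmer sigma j) :> rat)%R.
Proof.
move=> hij'; have hij : nat_of_ord j = (nat_of_ord i).+1 := hij'.
rewrite /paper_comp (adjT_eq hij) LF2_tperm //.
have e1 : n - 1 - j = n - j.+1 by lia.
rewrite e1.
case: (ltngtP (sigma i) (sigma j)) => h.
- have [_ _ le E] := key hij h.
  rewrite E (minn_idPl le) natrD addrAC subrr add0r ger0_norm ?ler0n //.
  have cj := lehmer_le sigma j.
  have -> : 2 ^ (n - j.+1) = 2 ^ (n - j.+1 - lehmer sigma i) * 2 ^ lehmer sigma i.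
    by rewrite -expnD subnK // (leq_trans le cj).
  by rewrite natrM !natrX mulfK // expf_neq0 // pnatr_eq0.
- set tau := (tperm i j * sigma)%g.
  have ht : tau i < tau j by rewrite /tau !permM tpermL tpermR.
  have [Li Lj le E] := key hij ht.
  have back : (tperm i j * tau)%g = sigma by rewrite /tau mulgA tperm2 mul1g.
  rewrite back in Li Lj E.
  rewrite E Li Lj minnC (minn_idPl (leq_trans le (leqnSn _))).
  rewrite natrD opprD addrA subrr add0r normrN ger0_norm ?ler0n //.
  have cj := lehmer_le tau j.
  have ci := lehmer_le tau i.
  have ci' : lehmer tau i <= n - j.+1 by apply: leq_trans le cj.
  have -> : 2 ^ (n - j.+1) = 2 ^ (n - j.+1 - lehmer tau i) * 2 ^ lehmer tau i.
    by rewrite -expnD subnK.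
  by rewrite natrM !natrX mulfK // expf_neq0 // pnatr_eq0.
- have : sigma i = sigma j by apply: ord_inj.
  move/perm_inj => e; move: hij; rewrite e; lia.
Qed.

Theorem theorem3p6 (n : nat) (hn : (0 < n)%N) :
  (* (i) *)
  (LF2 (e_perm n) = 0%N /\ (forall sigma : 'S_n, (LF2 (e_perm n) <= LF2 sigma)%N)
       /\ (forall sigma : 'S_n, LF2 sigma = LF2 (e_perm n) -> sigma = e_perm n)) /\
  (* (ii) *)
     (LF2 (ebar n) = (2 ^ n - n.+1)%N
       /\ (forall sigma : 'S_n, (LF2 sigma <= LF2 (ebar n))%N)
       /\ (forall sigma : 'S_n, LF2 sigma = LF2 (ebar n) -> sigma = ebar n)) /\
  (* (iii) *)
     ((forall s : nat, (0 < s)%N -> (s < n)%N -> LF2 (adjT n s) = (2 ^ (n - 1 - s))%N)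
       /\ (forall s : nat, (0 < s)%N -> (s.+1 < n)%N ->
             (LF2 (adjT n s.+1) < LF2 (adjT n s))%N)) /\
  (* (iv) *)
     (forall sigma : 'S_n, LF2 (iota_incl sigma) = LF2 sigma) /\
  (* (v) *)
     (forall sigma : 'S_n, LF2 sigma = LF2 (sigma^-1)%g) /\
  (* (vi) *)
     (forall sigma tau : 'S_n, (LF2 (paper_comp sigma tau) <= LF2 sigma + LF2 tau)%N) /\
  (* (vii): paper s = val j = (val i).+1; c_s = lehmer sigma i, c_{s+1} = lehmer sigma j *)
     (forall (sigma : 'S_n) (i j : 'I_n), val j = (val i).+1 ->
        (`|(LF2 (paper_comp sigma (adjT n (val j))))%:R - (LF2 sigma)%:R| =
        (LF2 (adjT n (val j)))%:R / 2 ^+ minn (lehmer sigma i) (lehmer sigma j) :> rat)%R).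
Proof.
split; first exact: part_i.
split; first exact: part_ii.
split; first exact: part_iii.
split; first exact: part_iv.
split; first exact: LF2_inv.
split; first exact: LF2_comp.
exact: part_vii.
Qed.
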